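(* Let $A,B,C$ be finite nonempty subsets of $\mathbb R$, let $f:\mathbb R\to\mathbb R$ be strictly convex, and suppose $|A+B|\le M|B|$. Then for every $\tau>0$, $$|\{x\in f(A)+C: (f(A)*C)(x)\ge\tau\}|\le c\,(M\log(2M))^2\frac{|B||C|^2}{\tau^3},$$ where $c>0$ is an absolute constant.
   Context: $f(A)=\{f(a):a\in A\}$; $(f(A)*C)(x)=|\{(u,v)\in f(A)\times C: u+v=x\}|$. Logarithms are to base 2. *)

(* Defs.v *)
From Stdlib Require Import Reals.
From mathcomp Require Import all_boot all_order all_algebra.
From mathcomp Require Import finmap.
From mathcomp Require Import Rstruct.
Set Implicit Arguments. Unset Strict Implicit. Unset Printing Implicit Defensive.
Local Open Scope fset_scope.

Definition strictly_convex (f : R -> R) : Prop :=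
  forall (x y t : R), x <> y -> (0 < t)%R -> (t < 1)%R ->
    (f (t * x + (1 - t) * y) < t * f x + (1 - t) * f y)%R.

Definition sumset (A B : {fset R}) : {fset R} :=
  [fset (a + b)%R | a in A, b in B].

Definition fimage (f : R -> R) (A : {fset R}) : {fset R} :=
  [fset f a | a in A].

Definition rep (X C : {fset R}) (x : R) : nat :=
  #|` [fset p in X `*` C | (p.1 + p.2)%R == x] |.

Definition log2 (x : R) : R := (ln x / ln 2)%R.

(* Main.v *)
Set Warnings "-notation-overridden,-ambiguous-paths,-notation-incompatible-prefix,-deprecated".
Require Import Defs.
From Stdlib Require Import Reals.
From mathcomp Require Import all_boot all_order all_algebra.
From mathcomp Require Import finmap.
From mathcomp Require Import Rstruct.
From mathcomp Require Import ring lra zify.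
Set Implicit Arguments. Unset Strict Implicit. Unset Printing Implicit Defensive.
Import Order.TTheory GRing.Theory Num.Theory.
Local Open Scope ring_scope.

Section Conv.
Variable f : R -> R.
Hypothesis hf : strictly_convex f.

Lemma three_slope (p q r : R) : p < q -> q < r ->
  f q * (r - p) < (r - q) * f p + (q - p) * f r.
Proof.
move=> pq qr.
have rp : 0 < r - p by lra.
pose t := (r - q) / (r - p).
have ht0 : 0 < t by apply: divr_gt0; lra.
have ht1 : t < 1 by rewrite /t ltr_pdivrMr //; lra.
have hq : t * p + (1 - t) * r = q.
  rewrite /t; field; lra.
have := @hf p r t.
rewrite hq => H.
have {}H := H (ltac:(move=> E; lra)) ht0 ht1.
have := ltr_pM2r rp.
move=> E; rewrite -E in H.
have -> : (r - q) * f p + (q - p) * f r = (t * f p + (1 - t) * f r) * (r - p).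
  rewrite /t; field; lra.
exact: H.
Qed.
Lemma gd_strict (d u v : R) : 0 < d -> u < v -> f (u + d) - f u < f (v + d) - f v.
Proof.
move=> d0 uv.
have l1 : u < u + d by lra.
have l2 : u + d < v + d by lra.
have l3 : v < v + d by lra.
have h1 := three_slope l1 l2.
have h2 := three_slope uv l3.
have W : 0 < v + d - u by lra.
have : 0 < ((f (v + d) - f v) - (f (u + d) - f u)) * (v + d - u) by nra.
by rewrite pmulr_lgt0 // subr_gt0.
Qed.

Lemma gd_strict' (d u v w z : R) : 0 < d -> u < v -> w = u + d -> z = v + d ->
  f w - f u < f z - f v.
Proof. by move=> d0 uv -> ->; apply: gd_strict. Qed.

Lemma gd_inj (d u v : R) : d != 0 -> f (u + d) - f u = f (v + d) - f v -> u = v.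
Proof.
move=> dn E; case: (ltgtP d 0) => H; last by move: dn; rewrite H eqxx.
- case: (ltgtP u v) => // uv.
  + have c1 : 0 < - d by lra.
    have c2 : u + d < v + d by lra.
    have c3 : u = u + d + - d by ring.
    have c4 : v = v + d + - d by ring.
    have := @gd_strict' (- d) (u + d) (v + d) u v c1 c2 c3 c4; lra.
  + have c1 : 0 < - d by lra.
    have c2 : v + d < u + d by lra.
    have c3 : u = u + d + - d by ring.
    have c4 : v = v + d + - d by ring.
    have := @gd_strict' (- d) (v + d) (u + d) v u c1 c2 c4 c3; lra.
- case: (ltgtP u v) => // uv.
  + have := @gd_strict d u v H uv; lra.
  + have := @gd_strict d v u H uv; lra.
Qed.

Lemma mono_left (m a a' : R) : f m <= f a -> a <= a' -> a' <= m -> f a' <= f a.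
Proof.
move=> fm aa' a'm.
case: (ltgtP a a') => [lt1|lt1|e]; last by rewrite e.
- case: (ltgtP a' m) => [lt2|lt2|e2]; last by rewrite e2.
  + have h := three_slope lt1 lt2. nra.
  + lra.
- lra.
Qed.

Lemma mono_right (m a a' : R) : f m <= f a' -> m <= a -> a <= a' -> f a <= f a'.
Proof.
move=> fm ma aa'.
case: (ltgtP a a') => [lt1|lt1|e]; last by rewrite e.
- case: (ltgtP m a) => [lt2|lt2|e2]; last by rewrite -e2.
  + have h := three_slope lt2 lt1. nra.
  + lra.
- lra.
Qed.
Lemma gd_inj' (d u v u' v' : R) : d != 0 -> u' = u + d -> v' = v + d ->
  f u' - f u = f v' - f v -> u = v.
Proof. by move=> dn -> ->; apply: gd_inj. Qed.
End Conv.
Section SeqLemmas.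

Lemma count_allpairs (S T U : eqType) (g : S -> T -> U) (s : seq S) (t : seq T)
  (P : pred U) :
  count P [seq g x y | x <- s, y <- t] = \sum_(x <- s) count (fun y => P (g x y)) t.
Proof.
elim: s => [|x s IH]; first by rewrite big_nil.
by rewrite allpairs_cons count_cat count_map IH big_cons.
Qed.

Lemma count_allpairs_pair (S T : eqType) (P1 : pred S) (P2 : pred T)
  (s : seq S) (t : seq T) :
  count (fun p => P1 p.1 && P2 p.2) [seq (x, y) | x <- s, y <- t] =
  (count P1 s * count P2 t)%N.
Proof.
rewrite count_allpairs /=.
elim: s => [|x s IH]; first by rewrite big_nil.
rewrite big_cons IH /= mulnDl; congr (_ + _)%N.
by case: (P1 x); rewrite ?mul1n ?mul0n //= count_pred0.
Qed.

Lemma sum_eq_mem (Y : eqType) (y : Y) (S : seq Y) : uniq S ->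
  \sum_(x <- S) (y == x : nat) = (y \in S : nat).
Proof.
elim: S => [|z S IH]; first by rewrite big_nil.
rewrite big_cons in_cons /= => /andP[zS uS]; rewrite IH //.
case: (eqVneq y z) => [->|] //=.
by rewrite (negbTE zS).
Qed.

Lemma count_in_sum (X Y : eqType) (g : X -> Y) (L : seq X) (S : seq Y) :
  uniq S ->
  count (fun p => g p \in S) L = \sum_(x <- S) count (fun p => g p == x) L.
Proof.
move=> uS; elim: L => [|p L IH] /=.
  by rewrite big1_seq // => x _.
by rewrite IH big_split /= sum_eq_mem.
Qed.

Definition pairsF (X Y : eqType) (Psi : X -> Y) (E : seq X) :=
  \sum_(e <- E) count (fun e' => (e != e') && (Psi e == Psi e')) E.

Lemma pairsF_cons (X Y : eqType) (Psi : X -> Y) (e : X) (E : seq X) :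
  e \notin E ->
  (pairsF Psi E + count (fun e' => Psi e == Psi e') E <= pairsF Psi (e :: E))%N.
Proof.
move=> eE; rewrite /pairsF big_cons /= eqxx /= add0n addnC.
apply: leq_add.
  rewrite (@eq_in_count _ _ (fun e' => Psi e == Psi e')) // => x xE.
  by have -> : (e != x) by apply/eqP => ex; rewrite ex xE in eE.
apply: leq_sum => i _; exact: leq_addl.
Qed.

Lemma img_pairs (X Y : eqType) (Psi : X -> Y) (E : seq X) : uniq E ->
  (size E <= size (undup (map Psi E)) + pairsF Psi E)%N.
Proof.
elim: E => [|e E IH] //= /andP[eE uE].
have := pairsF_cons Psi eE.
case: ifP => hin.
  have : (0 < count (fun e' => Psi e == Psi e') E)%N.
    rewrite -has_count; case/mapP: hin => x xE ex.
    by apply/hasP; exists x => //; rewrite ex.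
  move: (IH uE); lia.
move: (IH uE) => /=; lia.
Qed.

Lemma pairsF_count (X Y : eqType) (Psi : X -> Y) (E : seq X) :
  pairsF Psi E = count (fun x => (x.1 != x.2) && (Psi x.1 == Psi x.2))
                   [seq (e, e') | e <- E, e' <- E].
Proof. by rewrite count_allpairs. Qed.

End SeqLemmas.
Definition pos (X : {fset R}) (x : R) : nat := count (fun y : R => y < x) (enum_fset X).

Lemma pos_le (X : {fset R}) x : (pos X x <= #|` X|)%N.
Proof. exact: count_size. Qed.

Lemma pos_mono (X : {fset R}) (x y : R) : x <= y -> (pos X x <= pos X y)%N.
Proof. move=> xy; apply: sub_count => z /= zx; exact: lt_le_trans zx xy. Qed.

Lemma pos_strict (X : {fset R}) (x y : R) : x \in X -> x < y -> (pos X x < pos X y)%N.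
Proof.
move=> xX xy; rewrite /pos.
have H := count_predUI (fun z : R => z < x) (@pred1 R x) (enum_fset X).
have h1 : count (predI (fun z : R => z < x) (@pred1 R x)) (enum_fset X) = 0%N.
  apply/eqP; rewrite -leqn0 leqNgt -has_count; apply/hasP => -[z _] /=.
  by case/andP => zx /eqP zE; rewrite zE ltxx in zx.
have h2 : (0 < count (@pred1 R x) (enum_fset X))%N.
  by rewrite -has_count; apply/hasP; exists x => //=.
have h3 : leq (count (predU (fun z : R => z < x) (@pred1 R x)) (enum_fset X))
           (count (fun z : R => z < y) (enum_fset X)).
  apply: sub_count => z /= /orP[zx|/eqP ->] //; exact: lt_trans zx xy.
rewrite h1 addn0 in H.
apply: leq_trans h3; rewrite H -addn1 leq_add2l; exact: h2.
Qed.

Lemma pos_inj (X : {fset R}) (x y : R) : x \in X -> y \in X -> pos X x = pos X y -> x = y.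
Proof.
move=> xX yX E; case: (ltgtP x y) => // H.
- by have := pos_strict xX H; rewrite E ltnn.
- by have := pos_strict yX H; rewrite E ltnn.
Qed.

Lemma slab_count (X : {fset R}) (w i : nat) : (0 < w)%N ->
  (count (fun y => i == pos X y %/ w) (enum_fset X) <= w)%N.
Proof.
move=> w0; rewrite -size_filter.
set L := filter _ _.
have uL : uniq L by apply: filter_uniq; exact: fset_uniq.
rewrite -(size_map (pos X)) -(size_iota (i * w) w).
apply: uniq_leq_size.
  rewrite map_inj_in_uniq // => x y; rewrite !mem_filter => /andP[_ xX] /andP[_ yX].
  exact: pos_inj.
move=> z /mapP[y]; rewrite mem_filter => /andP[/eqP iy _] ->.
rewrite mem_iota; apply/andP; split.
  rewrite iy; exact: leq_trunc_div.
rewrite iy; have := ltn_ceil (pos X y) w0. lia.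
Qed.

Lemma mem_sumset (A B : {fset R}) a b : a \in A -> b \in B -> a + b \in sumset A B.
Proof. by move=> aA bB; apply/imfset2P; exists a => //; exists b. Qed.

Section Core.
Variables (A B C S : {fset R}) (f : R -> R) (m0 : R) (w h : nat).
Hypothesis hm0 : forall a, a \in A -> f m0 <= f a.
Hypothesis w0 : (0 < w)%N.
Hypothesis h0 : (0 < h)%N.

Definition AC := [seq (a, c) | a <- enum_fset A, c <- enum_fset C].
Definition J0 := [seq p <- AC | f p.1 + p.2 \in S].
Definition EE := [seq (b, p) | b <- enum_fset B, p <- J0].
Definition point (e : R * (R * R)) := (e.2.1 + e.1, f e.2.1 + e.2.2).
Definition col (x : R) := (pos (sumset A B) x %/ w)%N.
Definition row (x : R) := (pos S x %/ h)%N.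
Definition Nc := (#|` sumset A B| %/ w)%N.
Definition Kr := (#|` S| %/ h)%N.
Definition phi (e : R * (R * R)) : nat :=
  let a := e.2.1 in
  let i := col (a + e.1) in
  let k := row (f a + e.2.2) in
  if a <= m0 then (i + (Kr - k))%N else ((Nc + Kr).+1 + i + k)%N.
Definition Psi (e : R * (R * R)) := (e.1, e.2.2, phi e).

Lemma memEE e : e \in EE ->
  [/\ e.1 \in B, e.2.1 \in A, e.2.2 \in C & f e.2.1 + e.2.2 \in S].
Proof.
case/allpairsP => -[b p] /= [bB]; rewrite mem_filter => /andP[pS pAC] ->.
case/allpairsP: pAC => -[a c] /= [aA cC] pE; subst p => /=.
by split.
Qed.

Lemma col_le x : (col x <= Nc)%N.
Proof. exact: leq_div2r (pos_le _ _). Qed.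
Lemma row_le x : (row x <= Kr)%N.
Proof. exact: leq_div2r (pos_le _ _). Qed.
Lemma col_mono x y : x <= y -> (col x <= col y)%N.
Proof. by move=> xy; apply: leq_div2r; apply: pos_mono. Qed.
Lemma row_mono x y : x <= y -> (row x <= row y)%N.
Proof. by move=> xy; apply: leq_div2r; apply: pos_mono. Qed.

Hypothesis hf : strictly_convex f.

Lemma cell_aux (b c a a' : R) : a \in A -> a' \in A -> a <= a' ->
  phi (b, (a, c)) = phi (b, (a', c)) ->
  col (a + b) = col (a' + b) /\ row (f a + c) = row (f a' + c).
Proof.
move=> aA a'A aa'; rewrite /phi /=.
have ci : (col (a + b) <= col (a' + b))%N by apply: col_mono; rewrite lerD2r.
have cl1 := col_le (a + b); have cl2 := col_le (a' + b).
have rl1 := row_le (f a + c); have rl2 := row_le (f a' + c).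
case: ifP => am; case: ifP => a'm.
- have fa : f a' <= f a := @mono_left f hf m0 a a' (hm0 aA) aa' a'm.
  have rk : (row (f a' + c) <= row (f a + c))%N by apply: row_mono; rewrite lerD2r.
  move=> E; split; lia.
- move=> E; lia.
- by move: am; rewrite (le_trans aa' a'm).
- have m0a : m0 <= a by rewrite leNgt; apply/negP => H; move: am; rewrite ltW.
  have fa : f a <= f a' := @mono_right f hf m0 a a' (hm0 a'A) m0a aa'.
  have rk : (row (f a + c) <= row (f a' + c))%N by apply: row_mono; rewrite lerD2r.
  move=> E; split; lia.
Qed.

Lemma cell_eq e e' : e \in EE -> e' \in EE -> Psi e = Psi e' ->
  col (point e).1 = col (point e').1 /\ row (point e).2 = row (point e').2.
Proof.
case: e => b [a c]; case: e' => b' [a' c'] /memEE[/= _ aA _ _] /memEE[/= _ a'A _ _].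
rewrite /Psi /= => -[eb ec ep]; subst b' c'; rewrite /point /=.
case: (lerP a a') => H.
  exact: cell_aux aA a'A H ep.
have [h1 h2] := cell_aux a'A aA (ltW H) (esym ep).
by split.
Qed.

Lemma pp_core (b1 a1 c1 a2 b3 a3 c3 a4 : R) : a1 != a2 ->
  a1 + b1 = a3 + b3 -> f a1 + c1 = f a3 + c3 ->
  a2 + b1 = a4 + b3 -> f a2 + c1 = f a4 + c3 ->
  [/\ a1 = a3, b1 = b3, c1 = c3 & a2 = a4].
Proof.
move=> n12 e1 e2 e3 e4.
have dn : a2 - a1 != 0 by rewrite subr_eq0 eq_sym.
have u1 : a2 = a1 + (a2 - a1) by ring.
have u2 : a4 = a3 + (a2 - a1) by lra.
have u3 : f a2 - f a1 = f a4 - f a3 by lra.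
have E := @gd_inj' f hf _ _ _ _ _ dn u1 u2 u3.
split => //; [lra | subst a3; lra | lra].
Qed.

Lemma sum_const_seq (T : Type) (r : seq T) (k : nat) :
  \sum_(i <- r) k = (size r * k)%N.
Proof. by elim: r => [|x r IH]; rewrite ?big_nil ?big_cons ?IH ?mulSn. Qed.

Lemma uniq_J0 : uniq J0.
Proof.
apply: filter_uniq; apply: allpairs_uniq; rewrite ?fset_uniq //.
by move=> [? ?] [? ?] _ _.
Qed.

Lemma uniq_EE : uniq EE.
Proof.
apply: allpairs_uniq; rewrite ?fset_uniq ?uniq_J0 //.
by move=> [? ?] [? ?] _ _.
Qed.

Definition cell (p : R * R) := (col p.1, row p.2).
Definition PP := [seq (x, y) | x <- enum_fset (sumset A B), y <- enum_fset S].
Definition pp (x : (R * (R * R)) * (R * (R * R))) := (point x.1, point x.2).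

Lemma pairs_bound : (pairsF Psi EE <= #|` sumset A B| * #|` S| * (w * h))%N.
Proof.
rewrite pairsF_count -size_filter.
set Qs := filter _ _.
have uQ : uniq Qs.
  apply: filter_uniq; apply: allpairs_uniq; rewrite ?uniq_EE //.
  by move=> [? ?] [? ?] _ _.
rewrite -(size_map pp).
apply: (@leq_trans (size [seq y <- [seq (p, q) | p <- PP, q <- PP] | cell y.1 == cell y.2])).
  apply: uniq_leq_size.
    rewrite map_inj_in_uniq //.
    move=> [[b1 [a1 c1]] [b2 [a2 c2]]] [[b3 [a3 c3]] [b4 [a4 c4]]].
    rewrite !mem_filter /= => /andP[/andP[n12 /eqP P12] _] /andP[/andP[n34 /eqP P34] _].
    case: P12 => eb12 ec12 _; case: P34 => eb34 ec34 _; subst b2 c2 b4 c4.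
    rewrite /pp /point /= => -[e1 e2 e3 e4].
    have n12' : a1 != a2 by apply: contraNneq n12 => ->.
    have [-> -> -> ->] := pp_core n12' e1 e2 e3 e4.
    by [].
  move=> z /mapP[[e e']]; rewrite mem_filter => /andP[/andP[_ /eqP Px]] xE ->.
  case/allpairsP: xE => -[e1 e1'] /= [eE e'E [E1 E1']]; subst e1 e1'.
  rewrite mem_filter; apply/andP; split.
    have [c1 c2] := cell_eq eE e'E Px.
    by rewrite /cell /= c1 c2.
  have pE : forall e0, e0 \in EE -> point e0 \in PP.
    move=> e0 /memEE[bB aA _ fS]; rewrite /point.
    by apply: allpairs_f => //; rewrite mem_sumset.
  by apply: allpairs_f; apply: pE.
rewrite size_filter count_allpairs /=.
apply: (@leq_trans (\sum_(p <- PP) (w * h)%N)).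
  apply: leq_sum => p _.
  rewrite (@eq_count _ _ (fun q => (col p.1 == col q.1) && (row p.2 == row q.2))); last first.
    by move=> q; rewrite /cell xpair_eqE.
  rewrite /PP (count_allpairs_pair (fun y => col p.1 == col y) (fun y => row p.2 == row y)).
  apply: leq_mul; exact: slab_count.
by rewrite sum_const_seq /PP size_allpairs mulnA.
Qed.

Lemma phi_lt e : (phi e < 2 * (Nc + Kr + 1))%N.
Proof.
rewrite /phi /=.
have c1 := col_le (e.2.1 + e.1); have r1 := row_le (f e.2.1 + e.2.2).
case: ifP => _; lia.
Qed.

Lemma img_bound :
  (size (undup (map Psi EE)) <= #|` B| * #|` C| * (2 * (Nc + Kr + 1)))%N.
Proof.
set R0 := (2 * (Nc + Kr + 1))%N.
rewrite -[X in (_ <= X * _)%N](size_allpairs pair (enum_fset B) (enum_fset C)).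
rewrite -(size_iota 0 R0) -(size_allpairs (fun bc (i : nat) => (bc.1, bc.2, i))).
apply: uniq_leq_size; first exact: undup_uniq.
move=> z; rewrite mem_undup => /mapP[e eE ->].
have [bB _ cC _] := memEE eE.
rewrite /Psi.
apply: (@allpairs_f _ _ _ (fun bc (i : nat) => (bc.1, bc.2, i)) _ _ (e.1, e.2.2) (phi e)).
  by apply: allpairs_f.
by rewrite mem_iota add0n phi_lt.
Qed.

Lemma core_ineq :
  (#|` B| * size J0 <= #|` B| * #|` C| * (2 * (Nc + Kr + 1))
      + #|` sumset A B| * #|` S| * (w * h))%N.
Proof.
have H := img_pairs Psi uniq_EE.
rewrite /EE size_allpairs in H.
apply: leq_trans H _; apply: leq_add; [exact: img_bound | exact: pairs_bound].
Qed.

End Core.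
Lemma rep_le_cnt (A C : {fset R}) f x :
  leq (rep (fimage f A) C x) (count (fun p => f p.1 + p.2 == x) (AC A C)).
Proof.
rewrite /rep -size_filter -(size_map (fun p => (f p.1, p.2))).
apply: uniq_leq_size; first exact: fset_uniq.
move=> z; rewrite !inE /= => /andP[/andP[z1 z2] /eqP zx].
case/imfsetP: z1 => a aA ez.
apply/mapP; exists (a, z.2); last by rewrite /= -ez; case: z {ez zx z2}.
rewrite mem_filter /= -ez zx eqxx /=.
exact: allpairs_f.
Qed.

Lemma J0_lower (A C S : {fset R}) f T :
  (forall x, x \in S -> leq T (rep (fimage f A) C x)) ->
  leq (#|` S| * T) (size (J0 A C S f)).
Proof.
move=> HT; rewrite /J0 size_filter.
rewrite (@count_in_sum _ _ (fun p => f p.1 + p.2) _ (enum_fset S) (fset_uniq S)).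
rewrite -sum_const_seq big_seq_cond [X in leq _ X]big_seq_cond.
apply: leq_sum => x /andP[xS _].
apply: leq_trans (HT x xS) _; exact: rep_le_cnt.
Qed.

Lemma rep_le_C (A C : {fset R}) f x : leq (rep (fimage f A) C x) #|` C|.
Proof.
rewrite /rep -(size_map snd); apply: uniq_leq_size.
  rewrite map_inj_in_uniq ?fset_uniq // => p q.
  rewrite !inE /= => /andP[_ /eqP px] /andP[_ /eqP qx] e2.
  case: p q px qx e2 => [p1 p2] [q1 q2] /= px qx e2; subst q2.
  have -> : p1 = q1 by lra.
  by [].
move=> z /mapP[p]; rewrite !inE /= => /andP[/andP[_ p2] _] ->; exact: p2.
Qed.

Lemma cnt_le_A (A C : {fset R}) f x :
  leq (count (fun p => f p.1 + p.2 == x) (AC A C)) #|` A|.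
Proof.
rewrite /AC count_allpairs -[X in leq _ X]muln1 -sum_const_seq.
apply: leq_sum => a _ /=.
rewrite (@eq_count _ _ (pred1 (x - f a))); last first.
  move=> c /=; apply/eqP/eqP => H; lra.
by rewrite count_uniq_mem ?fset_uniq // leq_b1.
Qed.
Lemma final_nat (a b m N s T J : nat) :
  (0 < T)%N -> (s * T <= J)%N -> (J <= a * m)%N -> (a <= N)%N -> (b <= N)%N ->
  ((0 < s)%N -> (T <= m)%N /\ (T <= a)%N) ->
  (forall w h, (0 < w)%N -> (0 < h)%N ->
     b * J <= b * m * (2 * (N %/ w + s %/ h + 1)) + N * s * (w * h))%N ->
  (s * T ^ 3 * b <= 400 * N ^ 2 * m ^ 2)%N.
Proof.
move=> T0 sJ Ja aN bN Hs core.
case: (posnP s) => [->|s0]; first by rewrite !mul0n.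
case: (posnP b) => [->|b0]; first by rewrite !muln0.
have [Tm Ta] := Hs s0.
have N0 : (0 < N)%N by lia.
set q := (16 * m %/ T)%N.
have q1 : (q * T <= 16 * m)%N by exact: leq_trunc_div.
have q2 : (16 * m < q.+1 * T)%N by exact: ltn_ceil.
set h := q.+1.
have h0 : (0 < h)%N by [].
have hT1 : (16 * m < h * T)%N by [].
have hT2 : (h * T <= 17 * m)%N by rewrite /h mulSn; lia.
have NhP : (0 < 2 * N * h)%N by rewrite !muln_gt0 N0 h0.
set w := (b * T %/ (2 * N * h))%N.
have w1 : (w * (2 * N * h) <= b * T)%N by exact: leq_trunc_div.
have w2 : (b * T < w.+1 * (2 * N * h))%N by exact: ltn_ceil.
case: (posnP w) => [w00|w0].
  rewrite w00 mul1n in w2.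
  have e1 : (b * T * T < 2 * N * h * T)%N by rewrite ltn_pmul2r.
  have e2 : (b * T * T <= 34 * N * m)%N.
    apply: leq_trans (ltnW e1) _.
    have -> : (2 * N * h * T = 2 * N * (h * T))%N by rewrite !mulnA.
    apply: leq_trans (leq_mul (leqnn (2 * N)) hT2) _.
    lia.
  have e3 : (s * T ^ 3 * b = (s * T) * (b * T * T))%N.
    by rewrite !expnS expn0 muln1; ring.
  rewrite e3.
  have e4 : (s * T * (b * T * T) <= (a * m) * (34 * N * m))%N.
    by apply: leq_mul => //; apply: leq_trans sJ Ja.
  have e5 : ((a * m) * (34 * N * m) <= (N * m) * (34 * N * m))%N.
    by apply: leq_mul => //; apply: leq_mul.
  apply: leq_trans e4 _; apply: leq_trans e5 _.
  rewrite !expnS expn0 !muln1.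
  have -> : (N * m * (34 * N * m) = 34 * (N * N * (m * m)))%N by ring.
  have -> : (400 * (N * N) * (m * m) = 400 * (N * N * (m * m)))%N by ring.
  by rewrite leq_pmul2r // ?muln_gt0 -?(ltn_pmul2l) //; lia.
have C := core w h w0 h0.
set Nw := (N %/ w)%N.
set sh := (s %/ h)%N.
have Nw1 : (Nw * w <= N)%N by exact: leq_trunc_div.
have sh1 : (sh * h <= s)%N by exact: leq_trunc_div.
set X := (Nw + sh + 1)%N.
have k1 : (2 * (N * s * (w * h)) <= b * s * T)%N.
  have e : (2 * (N * s * (w * h)) = s * (w * (2 * N * h)))%N by ring.
  have e' : (b * s * T = s * (b * T))%N by ring.
  by rewrite e e' leq_mul.
have k0 : (b * s * T <= b * J)%N.
  have e' : (b * s * T = b * (s * T))%N by ring.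
  by rewrite e' leq_mul.
have eC : (b * m * (2 * X) = 2 * (b * m * X))%N by ring.
rewrite eC in C.
have k2 : (b * s * T <= 4 * (b * m * X))%N by lia.
have k3 : (s * T <= 4 * m * X)%N.
  have e1 : (b * s * T = b * (s * T))%N by ring.
  have e2 : (4 * (b * m * X) = b * (4 * m * X))%N by ring.
  by rewrite e1 e2 leq_pmul2l in k2.
have k4 : (16 * m * sh <= s * T)%N.
  have := leq_mul (ltnW hT1) (leqnn sh).
  have := leq_mul sh1 (leqnn T).
  have e1 : (h * T * sh = sh * h * T)%N by ring.
  rewrite e1; lia.
have k5 : (3 * (s * T) <= 16 * (m * Nw) + 16 * m)%N.
  have e1 : (4 * m * X = 4 * (m * Nw) + 4 * (m * sh) + 4 * m)%N by rewrite /X; ring.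
  have e2 : (16 * m * sh = 16 * (m * sh))%N by ring.
  rewrite e1 in k3; rewrite e2 in k4; lia.
have k6 : (Nw * (b * T) <= 4 * N * N * h)%N.
  have a1 : (Nw * (b * T) <= Nw * (w.+1 * (2 * N * h)))%N.
    by apply: leq_mul => //; exact: ltnW.
  have a2 : (w.+1 <= 2 * w)%N by lia.
  have a3 : (Nw * (w.+1 * (2 * N * h)) <= Nw * ((2 * w) * (2 * N * h)))%N.
    by apply: leq_mul => //; apply: leq_mul.
  have a4 : (Nw * ((2 * w) * (2 * N * h)) = 4 * (Nw * w) * N * h)%N by ring.
  have a5 : (4 * (Nw * w) * N * h <= 4 * N * N * h)%N.
    by apply: leq_mul => //; apply: leq_mul => //; apply: leq_mul.
  rewrite a4 in a3; lia.
have k7 : (3 * (s * T ^ 3 * b) <= 64 * m * N * N * (h * T) + 16 * m * (b * T * T))%N.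
  have a1 := leq_mul k5 (leqnn (b * T * T)).
  have e1 : (3 * (s * T) * (b * T * T) = 3 * (s * T ^ 3 * b))%N.
    by rewrite !expnS expn0 muln1; ring.
  have e2 : ((16 * (m * Nw) + 16 * m) * (b * T * T) =
             16 * m * T * (Nw * (b * T)) + 16 * m * (b * T * T))%N by ring.
  rewrite e1 e2 in a1.
  have a2 : (16 * m * T * (Nw * (b * T)) <= 16 * m * T * (4 * N * N * h))%N.
    by apply: leq_mul.
  have e3 : (16 * m * T * (4 * N * N * h) = 64 * m * N * N * (h * T))%N by ring.
  rewrite e3 in a2; lia.
have k8 : (b * T * T <= N * N * m)%N.
  apply: leq_mul; [apply: leq_mul => //; lia | exact: Tm].
have k9 : (64 * m * N * N * (h * T) <= 64 * m * N * N * (17 * m))%N.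
  by apply: leq_mul.
have k10 : (16 * m * (b * T * T) <= 16 * m * (N * N * m))%N.
  by apply: leq_mul.
have e1 : (64 * m * N * N * (17 * m) = 1088 * (N * N * (m * m)))%N by ring.
have e2 : (16 * m * (N * N * m) = 16 * (N * N * (m * m)))%N by ring.
have e3 : (400 * N ^ 2 * m ^ 2 = 400 * (N * N * (m * m)))%N.
  by rewrite !expnS expn0 !muln1; ring.
rewrite e3; rewrite e1 in k9; rewrite e2 in k10.
lia.
Qed.

Lemma ex_min (f : R -> R) (L : seq R) : exists m0, forall a, a \in L -> f m0 <= f a.
Proof.
elim: L => [|x L [m IH]]; first by exists 0.
case: (lerP (f x) (f m)) => H.
  exists x => a; rewrite in_cons => /orP[/eqP ->|aL] //.
  exact: le_trans H (IH a aL).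
exists m => a; rewrite in_cons => /orP[/eqP ->|aL]; [exact: ltW | exact: IH].
Qed.

Lemma card_le_sumsetA (A B : {fset R}) b0 : b0 \in B -> leq #|` A| #|` sumset A B|.
Proof.
move=> bB; rewrite -(size_map (fun a => a + b0)); apply: uniq_leq_size.
  by rewrite map_inj_in_uniq ?fset_uniq // => x y _ _; apply: addIr.
by move=> z /mapP[a aA ->]; apply: mem_sumset.
Qed.

Lemma card_le_sumsetB (A B : {fset R}) a0 : a0 \in A -> leq #|` B| #|` sumset A B|.
Proof.
move=> aA; rewrite -(size_map (fun b => a0 + b)); apply: uniq_leq_size.
  by rewrite map_inj_in_uniq ?fset_uniq // => x y _ _; apply: addrI.
by move=> z /mapP[b bB ->]; apply: mem_sumset.
Qed.

Lemma J0_le (A C S : {fset R}) f : leq (size (J0 A C S f)) (#|` A| * #|` C|).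
Proof. by rewrite /J0 size_filter -(size_allpairs pair); apply: count_size. Qed.

Local Open Scope fset_scope.

Theorem lemma27 :
  exists c : R, 0 < c /\
  forall (A B C : {fset R}) (f : R -> R) (M tau : R),
    A != fset0 -> B != fset0 -> C != fset0 ->
    strictly_convex f ->
    (#|` sumset A B|)%:R <= M * (#|` B|)%:R ->
    0 < tau ->
    (#|` [fset x in sumset (fimage f A) C | tau <= (rep (fimage f A) C x)%:R] |)%:R
      <= c * (M * log2 (2 * M)) ^+ 2 * ((#|` B|)%:R * (#|` C|)%:R ^+ 2 / tau ^+ 3).
Proof.
exists 400; split; first by rewrite ltr0n.
move=> A B C f M tau An Bn Cn hf hM htau.
set FA := fimage f A.
set S := [fset x in sumset FA C | tau <= (rep FA C x)%:R].
case/fset0Pn: An => a0 a0A.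
case/fset0Pn: Bn => b0 b0B.
have cpos : (0 < Num.ceil tau)%R by rewrite ceil_gt0.
set T := `|Num.ceil tau|%N.
have TE : (T%:Z = Num.ceil tau)%R by rewrite /T gez0_abs // ltW.
have T0 : (0 < T)%N by rewrite -ltz_nat TE.
have tauT : tau <= T%:R by rewrite pmulrn TE; exact: ceil_ge.
have HT : forall x, x \in S -> (T <= rep FA C x)%N.
  move=> x; rewrite !inE => /andP[_ H].
  by rewrite -lez_nat TE ceil_le_int -pmulrn.
have core : forall w h, (0 < w)%N -> (0 < h)%N ->
  (#|` B| * size (J0 A C S f) <= #|` B| * #|` C| * (2 * (#|` sumset A B| %/ w + #|` S| %/ h + 1))
      + #|` sumset A B| * #|` S| * (w * h))%N.
  move=> w h w0 h0; have [m0 hm0] := ex_min f (enum_fset A).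
  exact: core_ineq hm0 w0 h0 hf.
have hs : (0 < #|` S|)%N -> (T <= #|` C|)%N /\ (T <= #|` A|)%N.
  move=> sp; have /fset0Pn[x xS] : S != fset0 by rewrite -cardfs_gt0.
  split; first exact: leq_trans (HT x xS) (rep_le_C _ _ _ _).
  exact: leq_trans (HT x xS) (leq_trans (rep_le_cnt _ _ _ _) (cnt_le_A _ _ _ _)).
have key := final_nat T0 (J0_lower HT) (J0_le A C S f) (card_le_sumsetA A b0B) (card_le_sumsetB B a0A) hs core.
set s := #|` S| in key *; set b := #|` B| in key hM *; set m := #|` C| in key *.
set N := #|` sumset A B| in key hM *.
have keyR : (s%:R * T%:R ^+ 3 * b%:R <= 400 * N%:R ^+ 2 * m%:R ^+ 2 :> R).
  by rewrite -!natrX -!natrM ler_nat.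
have b1 : (1 <= b%:R :> R) by rewrite ler1n /b cardfs_gt0; apply/fset0Pn; exists b0.
have bN : (b%:R <= N%:R :> R) by rewrite ler_nat /b /N; apply: card_le_sumsetB a0A.
have M1 : 1 <= M.
  have : 1 * b%:R <= M * b%:R by rewrite mul1r; exact: le_trans bN hM.
  by rewrite ler_pM2r //; lra.
have L1 : 1 <= log2 (2 * M).
  have l2 : 0 < ln 2.
    have h1 : Rlt (0%R) (1%R) by apply/RltP; exact: ltr01.
    have h2 : Rlt (1%R) (2%R) by apply/RltP; lra.
    have := ln_increasing _ _ h1 h2; rewrite ln_1 => /RltP; exact.
  have l3 : ln 2 <= ln (2 * M).
    case: (ltgtP M 1) => HM; first by lra.
      have h1 : Rlt (0%R) (2%R) by apply/RltP; lra.
      have h2 : Rlt (2%R) (2 * M)%R by apply/RltP; lra.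
      by apply: ltW; apply/RltP; exact: ln_increasing _ _ h1 h2.
    apply/RleP; apply: Req_le; f_equal; rewrite HM; exact: (esym (Rmult_1_r _)).
  by rewrite /log2 ler_pdivlMr // mul1r.
set L := log2 (2 * M) in L1 *.
have tau3 : tau ^+ 3 <= T%:R ^+ 3 by rewrite lerXn2r // ?nnegrE; lra.
have s0 : 0 <= s%:R :> R by [].
have m0 : 0 <= m%:R :> R by [].
have N0 : 0 <= N%:R :> R by [].
have t3 : 0 < tau ^+ 3 by rewrite exprn_gt0.
have step1 : s%:R * tau ^+ 3 * b%:R <= 400 * (M * b%:R) ^+ 2 * m%:R ^+ 2.
  have e1 : s%:R * tau ^+ 3 * b%:R <= s%:R * T%:R ^+ 3 * b%:R.
    by apply: ler_wpM2r; [lra | apply: ler_wpM2l].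
  have e2 : 400 * N%:R ^+ 2 * m%:R ^+ 2 <= 400 * (M * b%:R) ^+ 2 * m%:R ^+ 2 :> R.
    apply: ler_wpM2r; first exact: exprn_ge0.
    apply: ler_wpM2l; first lra.
    rewrite lerXn2r // ?nnegrE //; nra.
  exact: le_trans e1 (le_trans keyR e2).
have step2 : (M * b%:R) ^+ 2 <= (M * L * b%:R) ^+ 2.
  have Mb : 0 <= M * b%:R by nra.
  have ML : M * b%:R <= M * L * b%:R by nra.
  by rewrite lerXn2r ?nnegrE //; nra.
have P0 : 0 < tau ^+ 3 * b%:R by apply: mulr_gt0 => //; lra.
rewrite -(ler_pM2r P0).
have -> : 400 * (M * L) ^+ 2 * (b%:R * m%:R ^+ 2 / tau ^+ 3) * (tau ^+ 3 * b%:R)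
          = 400 * (M * L * b%:R) ^+ 2 * m%:R ^+ 2.
  by field; lra.
rewrite mulrA.
apply: le_trans step1 _.
apply: ler_wpM2r; first exact: exprn_ge0.
by apply: ler_wpM2l.
Qed.
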